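(* Let $\alpha\in[0,1)$ and let $X_1,\dots,X_N$ be independent random variables with $X_i\sim\operatorname{Ber}(p_i,s_i)$, $p_i\in[0,1]$, $0<s_i\le 1$. If $B=\sum_{i=1}^N X_i$ satisfies $\mathbb{P}(B>1)\le\alpha$, then $\mathbb{E}(B)\le\frac{1+\alpha}{1-\alpha}$.
   Context: $X\sim\operatorname{Ber}(p,s)$ means $X=s$ with probability $p$ and $X=0$ with probability $1-p$. *)

(* Defs.v *)
From mathcomp Require Import all_boot all_order all_algebra.
Set Implicit Arguments. Unset Strict Implicit. Unset Printing Implicit Defensive.
Import Order.TTheory GRing.Theory Num.Theory.
Local Open Scope ring_scope.

(* Sample space: outcomes w : {ffun 'I_N -> bool}; w i = true means X_i = s_i,
   w i = false means X_i = 0.  The product measure below makes the X_i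
   independent with X_i ~ Ber(p_i, s_i). *)
Definition ber_prob (R : nzRingType) (N : nat) (p : 'I_N -> R)
  (w : {ffun 'I_N -> bool}) : R :=
  \prod_(i < N) (if w i then p i else 1 - p i).

Definition ber_X (R : nzRingType) (N : nat) (s : 'I_N -> R)
  (w : {ffun 'I_N -> bool}) (i : 'I_N) : R :=
  if w i then s i else 0.

Definition ber_B (R : nzRingType) (N : nat) (s : 'I_N -> R)
  (w : {ffun 'I_N -> bool}) : R :=
  \sum_(i < N) ber_X s w i.

Definition prob_B_gt1 (R : numDomainType) (N : nat) (p s : 'I_N -> R) : R :=
  \sum_(w : {ffun 'I_N -> bool} | 1 < ber_B s w) ber_prob p w.

Definition expect_B (R : nzRingType) (N : nat) (p s : 'I_N -> R) : R :=
  \sum_(w : {ffun 'I_N -> bool}) ber_prob p w * ber_B s w.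

(* Main.v *)
Require Import Defs.
From mathcomp Require Import all_boot all_order all_algebra.
From mathcomp Require Import ring lra.
Set Implicit Arguments. Unset Strict Implicit.
Import Order.TTheory GRing.Theory Num.Theory.
Local Open Scope ring_scope.

Definition flip (N : nat) (i : 'I_N) (w : {ffun 'I_N -> bool}) : {ffun 'I_N -> bool} :=
  [ffun j => if j == i then ~~ w i else w j].

Lemma flipK N (i : 'I_N) : involutive (flip i).
Proof.
move=> w; apply/ffunP=> j; rewrite !ffunE.
by case: eqP => [->|//]; rewrite eqxx negbK.
Qed.

Lemma flip_i N (i : 'I_N) w : flip i w i = ~~ w i.
Proof. by rewrite ffunE eqxx. Qed.

Lemma flip_j N (i j : 'I_N) w : j != i -> flip i w j = w j.
Proof. by rewrite ffunE => /negPf ->. Qed.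

Definition Qm (R : nzRingType) N (p : 'I_N -> R) (i : 'I_N) w :=
  \prod_(j | j != i) (if w j then p j else 1 - p j).

Lemma prob_split (R : comNzRingType) N (p : 'I_N -> R) i w :
  ber_prob p w = (if w i then p i else 1 - p i) * Qm p i w.
Proof. by rewrite /ber_prob (bigD1 i). Qed.

Lemma Qm_flip (R : nzRingType) N (p : 'I_N -> R) i w : Qm p i (flip i w) = Qm p i w.
Proof. by apply: eq_bigr => j ji; rewrite flip_j. Qed.

Lemma sum_flip (R : nzRingType) N (i : 'I_N) (K : {ffun 'I_N -> bool} -> R) :
  (forall w, K (flip i w) = K w) ->
  \sum_(w : {ffun 'I_N -> bool} | ~~ w i) K w = \sum_(w : {ffun 'I_N -> bool} | w i) K w.
Proof.
move=> HK; rewrite (reindex_inj (can_inj (flipK i))) /=.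
by apply: eq_big => w; rewrite ?flip_i ?negbK ?HK.
Qed.

Lemma key (R : comNzRingType) N (p s : 'I_N -> R) i (H : {ffun 'I_N -> bool} -> R) :
  (forall w, H (flip i w) = H w) ->
  \sum_w ber_prob p w * (ber_X s w i * H w) = p i * s i * \sum_w ber_prob p w * H w.
Proof.
move=> HH.
pose K (w : {ffun 'I_N -> bool}) := Qm p i w * H w.
have HK : forall w, K (flip i w) = K w by move=> w; rewrite /K Qm_flip HH.
rewrite (bigID (fun w : {ffun 'I_N -> bool} => w i)) [X in _ = _ * X](bigID (fun w : {ffun 'I_N -> bool} => w i)) /=.
rewrite (eq_bigr (fun w => p i * s i * K w)); last first.
  by move=> w; rewrite ?andTb => Hw; rewrite (prob_split p i) /ber_X Hw /K; ring.
rewrite [X in _ + X = _](eq_bigr (fun w => 0)); last first.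
  by move=> w; rewrite ?andTb => /negPf Hw; rewrite /ber_X Hw mul0r mulr0.
rewrite [X in _ = _ * (X + _)](eq_bigr (fun w => p i * K w)); last first.
  by move=> w; rewrite ?andTb => Hw; rewrite (prob_split p i) Hw /K mulrA.
rewrite [X in _ = _ * (_ + X)](eq_bigr (fun w => (1 - p i) * K w)); last first.
  by move=> w; rewrite ?andTb => /negPf Hw; rewrite (prob_split p i) Hw /K mulrA.
rewrite -!mulr_sumr big1_eq addr0.
rewrite (sum_flip HK).
ring.
Qed.

Definition Bm (R : nzRingType) N (s : 'I_N -> R) (i : 'I_N) w :=
  \sum_(j | j != i) ber_X s w j.

Lemma B_split (R : nzRingType) N (s : 'I_N -> R) i w :
  ber_B s w = ber_X s w i + Bm s i w.
Proof. by rewrite /ber_B (bigD1 i). Qed.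

Lemma Bm_flip (R : nzRingType) N (s : 'I_N -> R) i w : Bm s i (flip i w) = Bm s i w.
Proof. by apply: eq_bigr => j ji; rewrite /ber_X flip_j. Qed.

Lemma sum_prob (R : comNzRingType) N (p : 'I_N -> R) :
  \sum_w ber_prob p w = 1.
Proof.
rewrite /ber_prob -(bigA_distr_bigA (fun i b => if b then p i else 1 - p i)) /=.
by apply: big1 => i _; rewrite big_bool /= addrC subrK.
Qed.

Lemma expectE (R : comNzRingType) N (p s : 'I_N -> R) :
  expect_B p s = \sum_i p i * s i.
Proof.
rewrite /expect_B /ber_B.
under eq_bigr do rewrite mulr_sumr.
rewrite exchange_big /=; apply: eq_bigr => i _.
transitivity (\sum_w ber_prob p w * (ber_X s w i * 1)).
  by apply: eq_bigr => w _; rewrite mulr1.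
rewrite (@key R N p s i (fun _ => 1)) //.
under eq_bigr do rewrite mulr1.
by rewrite sum_prob mulr1.
Qed.

Lemma pointwise (R : realFieldType) N (s : 'I_N -> R) (hs : forall i, 0 < s i <= 1) w :
  ber_B s w <= 1 + (if 1 < ber_B s w then 1 else 0)
               + \sum_i ber_X s w i * (if 1 < Bm s i w then 1 else 0).
Proof.
have X01 : forall i, 0 <= ber_X s w i <= 1.
  move=> i; rewrite /ber_X; case: (w i); last by rewrite lexx ler01.
  by have /andP[/ltW -> ->] := hs i.
have S0 : 0 <= \sum_i ber_X s w i * (if 1 < Bm s i w then 1 else 0).
  apply: sumr_ge0 => i _; have /andP[h _] := X01 i.
  by case: ifP => _; rewrite ?mulr1 ?mulr0.
case: (leP (ber_B s w) 1) => hB; first lra.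
case: (leP (ber_B s w) 2) => h2; first lra.
suff -> : \sum_i ber_X s w i * (if 1 < Bm s i w then 1 else 0) = ber_B s w by lra.
apply: eq_bigr => i _.
have /andP[_ h] := X01 i.
have := B_split s i w => hs'.
have -> : 1 < Bm s i w by lra.
by rewrite mulr1.
Qed.

Theorem lemma5 (R : realFieldType) (N : nat) (alpha : R) (p s : 'I_N -> R) :
  0 <= alpha -> alpha < 1 ->
  (forall i, 0 <= p i <= 1) ->
  (forall i, 0 < s i <= 1) ->
  prob_B_gt1 p s <= alpha ->
  expect_B p s <= (1 + alpha) / (1 - alpha).
Proof.
move=> a0 a1 hp hs hq.
have P0 : forall w, 0 <= ber_prob p w.
  move=> w; apply: prodr_ge0 => i _; have /andP[h1 h2] := hp i.
  by case: (w i) => //; rewrite subr_ge0.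
have ps0 : forall i, 0 <= p i * s i.
  by move=> i; have /andP[h1 _] := hp i; have /andP[/ltW h2 _] := hs i; apply: mulr_ge0.
set q := prob_B_gt1 p s in hq.
have qE : q = \sum_w ber_prob p w * (if 1 < ber_B s w then 1 else 0).
  rewrite /q /prob_B_gt1 big_mkcond; apply: eq_bigr => w _.
  by case: ifP; rewrite ?mulr1 ?mulr0.
set mu := expect_B p s.
have muE : mu = \sum_i p i * s i by rewrite /mu expectE.
have mu0 : 0 <= mu by rewrite muE; apply: sumr_ge0 => i _.
have Hbound : mu <= 1 + q + mu * q.
  apply: (@le_trans _ _ (\sum_w ber_prob p w * (1 + (if 1 < ber_B s w then 1 else 0)
               + \sum_i ber_X s w i * (if 1 < Bm s i w then 1 else 0)))).
    by apply: ler_sum => w _; apply: ler_wpM2l => //; apply: pointwise.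
  under eq_bigr do rewrite !mulrDr.
  rewrite !big_split /=.
  under [X in X + _ + _]eq_bigr do rewrite mulr1.
  rewrite sum_prob -qE.
  rewrite lerD2l.
  under eq_bigr do rewrite mulr_sumr.
  rewrite exchange_big /=.
  rewrite (eq_bigr (fun i => p i * s i * \sum_w ber_prob p w * (if 1 < Bm s i w then 1 else 0))); last first.
    by move=> i _; apply: key => w; rewrite Bm_flip.
  rewrite muE mulr_suml; apply: ler_sum => i _; apply: ler_wpM2l => //.
  rewrite qE; apply: ler_sum => w _; apply: ler_wpM2l => //.
  case: ifP => // h; case: ifP => // h'; exfalso.
  have := B_split s i w; have : 0 <= ber_X s w i.
    by rewrite /ber_X; case: (w i) => //; have /andP[/ltW -> _] := hs i.
  move=> hx hB.
  have : 1 < ber_B s w by lra.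
  by rewrite h'.
rewrite ler_pdivlMr; last by lra.
nra.
Qed.
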